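(* Let $\mathbf{V}$ be a finite set of random variables containing a target variable $T$, and let $\mathbf{F} = \mathbf{V} \setminus \{T\}$ be the set of features. Suppose the joint distribution $P$ of $\mathbf{V}$ can be faithfully represented by a directed maximal ancestral graph, and suppose the algorithm PFBP (described in the context) has access to a conditional independence oracle for $P$ and imposes no limit on the number of selected features. Then PFBP with no limit on the number of Runs returns the Markov blanket of $T$.
   Context: Notation: $\mathbf{X} \perp T \mid \mathbf{S}$ denotes conditional independence of $\mathbf{X}$ and $T$ given $\mathbf{S}$ under $P$. A Markov blanket of $T$ with respect to $\mathbf{V}$ is a minimal set $\mathbf{S} \subseteq \mathbf{F}$ such that $(\mathbf{V}\setminus(\mathbf{S}\cup\{T\})) \perp T \mid \mathbf{S}$; for faithful distributions it is unique. A directed maximal ancestral graph (DMAG) is a mixed graph with directed and bi-directed edges (the class of graphs closed under marginalization of Bayesian networks); it entails conditional independencies via m-separation. $P$ can be faithfully represented by a DMAG $G$ if the conditional independencies holding in $P$ are exactly those entailed by m-separation in $G$. The PFBP algorithm with an independence oracle (Parallel Forward-Backward with Pruning, with Early Dropping) operates as follows. Initially the selected set is $\mathbf{S} = \emptyset$. It performs Runs, up to a maximum number maxRuns of Runs, stopping early if a Run leaves $\mathbf{S}$ unchanged. Each Run consists of: (1) set the remaining set $\mathbf{R} = \mathbf{F} \setminus \mathbf{S}$; (2) forward phase: repeat iterations in which every $X \in \mathbf{R}$ with $X \perp T \mid \mathbf{S}$ is removed from $\mathbf{R}$ (Early Dropping), and then, if some $X \in \mathbf{R}$ is conditionally dependent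 on $T$ given $\mathbf{S}$, one such variable (the best-ranked one) is added to $\mathbf{S}$ and removed from $\mathbf{R}$; the forward phase ends when no variable is added; (3) backward phase: repeatedly, if some $X \in \mathbf{S}$ satisfies $X \perp T \mid \mathbf{S}\setminus\{X\}$, remove one such variable from $\mathbf{S}$; stop when no variable can be removed. The output is $\mathbf{S}$. ''No limit on the number of Runs'' means maxRuns $=\infty$, so Runs continue until $\mathbf{S}$ no longer changes. *)

(* Defs.v *)
From mathcomp Require Import all_boot.
Set Implicit Arguments. Unset Strict Implicit. Unset Printing Implicit Defensive.

Section Defs.
Variable V : finType.

(* A mixed graph on V: [dir u v] means u -> v, [bi u v] means u <-> v. *)

Definition adjacent (dir bi : rel V) (u v : V) : bool :=
  [|| dir u v, dir v u | bi u v].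

(* u is an ancestor of v (reflexive: every vertex is its own ancestor). *)
Definition ancestor (dir : rel V) (u v : V) : bool := connect dir u v.

(* Arrowhead at v on the edge between u and v. *)
Definition into (dir bi : rel V) (u v : V) : bool := dir u v || bi u v.

Definition collider (dir bi : rel V) (u v w : V) : bool :=
  into dir bi u v && into dir bi w v.

Fixpoint interior_ok (dir bi : rel V) (Z : {set V}) (u v : V) (s : seq V) : bool :=
  match s with
  | [::] => true
  | w :: s' =>
      (if collider dir bi u v w then [exists z in Z, ancestor dir v z]
       else v \notin Z) && interior_ok dir bi Z v w s'
  end.

Definition m_connected (dir bi : rel V) (Z : {set V}) (a b : V) : Prop :=
  exists p : seq V,
    [&& path (adjacent dir bi) a p, uniq (a :: p), last a p == b &
        match p with
        | [::] => true
        | v :: p' => interior_ok dir bi Z a v p'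
        end].

Definition m_separated (dir bi : rel V) (A B Z : {set V}) : Prop :=
  forall a b, a \in A -> b \in B -> ~ m_connected dir bi Z a b.

Definition is_DMAG (dir bi : rel V) : Prop :=
  (forall u v, bi u v = bi v u) /\ (forall u, ~~ bi u u) /\
  (forall u v, dir u v -> ~~ ancestor dir v u) /\
  (forall u v, bi u v -> ~~ ancestor dir u v) /\
  (forall u v, ~~ (dir u v && bi u v)) /\
  (forall u v, u != v -> ~~ adjacent dir bi u v ->
     exists Z : {set V}, [/\ u \notin Z, v \notin Z &
                            m_separated dir bi [set u] [set v] Z]).

(* [ci A B Z] is the conditional independence statement A _||_ B | Z of P. *)
Definition faithful_to (ci : {set V} -> {set V} -> {set V} -> bool)
  (dir bi : rel V) : Prop :=
  forall A B Z : {set V},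
    [disjoint A & B] -> [disjoint A & Z] -> [disjoint B & Z] ->
    (ci A B Z <-> m_separated dir bi A B Z).

Definition features (T : V) : {set V} := [set~ T].

Definition blanket_cond (ci : {set V} -> {set V} -> {set V} -> bool)
  (T : V) (S : {set V}) : bool :=
  ci (~: (S :|: [set T])) [set T] S.

Definition is_markov_blanket (ci : {set V} -> {set V} -> {set V} -> bool)
  (T : V) (S : {set V}) : Prop :=
  [/\ S \subset features T, blanket_cond ci T S &
      forall S' : {set V}, S' \proper S -> ~~ blanket_cond ci T S'].

Variable ci : {set V} -> {set V} -> {set V} -> bool.
Variable T : V.
(* [fsel R S]: the best-ranked variable among the candidates R (forward);
   [bsel C S]: the variable chosen for removal among candidates C (backward). *)
Variables fsel bsel : {set V} -> {set V} -> V.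

Definition indepT (X : V) (S : {set V}) : bool := ci [set X] [set T] S.

(* Forward phase with fuel; each iteration: Early Dropping, then add one. *)
Fixpoint forward (n : nat) (R S : {set V}) : {set V} :=
  match n with
  | 0 => S
  | n'.+1 =>
      let R' := [set X in R | ~~ indepT X S] in
      if R' == set0 then S
      else let x := fsel R' S in forward n' (R' :\ x) (x |: S)
  end.

Fixpoint backward (n : nat) (S : {set V}) : {set V} :=
  match n with
  | 0 => S
  | n'.+1 =>
      let C := [set X in S | indepT X (S :\ X)] in
      if C == set0 then S else backward n' (S :\ bsel C S)
  end.

(* One Run; the fuel #|V|.+1 is never exhausted (R resp. S shrinks). *)
Definition pfbp_run (S : {set V}) : {set V} :=
  backward #|V|.+1 (forward #|V|.+1 (features T :\: S) S).

Definition pfbp_after (k : nat) : {set V} := iter k pfbp_run set0.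

End Defs.

(* Main.v *)
From Stdlib Require Import Classical.
Require Import Defs.
From mathcomp Require Import all_boot.

Set Implicit Arguments. Unset Strict Implicit. Unset Printing Implicit Defensive.

Section Pf.
Variables (V : finType) (T : V) (dir bi : rel V)
  (ci : {set V} -> {set V} -> {set V} -> bool)
  (fsel bsel : {set V} -> {set V} -> V).
Hypothesis hfaith : faithful_to ci dir bi.
Hypothesis hfsel : forall R S : {set V}, R != set0 -> fsel R S \in R.
Hypothesis hbsel : forall C S : {set V}, C != set0 -> bsel C S \in C.

Local Notation adj := (adjacent dir bi).
Local Notation mc Z a := (m_connected dir bi Z a T).
Local Notation ind := (indepT ci T).
Local Notation F := (features T).
Implicit Types (Z W S B R C : {set V}) (a u v w x X Y : V) (p s : seq V).

Definition mcb (Z : {set V}) (a : V) (p : seq V) := [&& path adj a p, uniq (a :: p), last a p == T &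
  match p with [::] => true | v :: p' => interior_ok dir bi Z a v p' end].

Definition blanket (Z : {set V}) := forall Y, Y \notin Z -> Y != T -> ~ mc Z Y.

Lemma indE (Z : {set V}) Y : T \notin Z -> Y \notin Z -> Y != T -> ind Y Z <-> ~ mc Z Y.
Proof.
move=> TZ YZ YT.
have H : ci [set Y] [set T] Z <-> m_separated dir bi [set Y] [set T] Z.
  by apply: hfaith; rewrite ?disjoints1 ?in_set1.
rewrite /indepT; split => [/H Hs Hm | Hn].
  exact: (Hs Y T (set11 Y) (set11 T) Hm).
by apply/H => a b; rewrite !in_set1 => /eqP-> /eqP->.
Qed.

Lemma int_mono (Z1 Z2 : {set V}) u v s : Z1 \subset Z2 ->
  {in v :: s, forall x, x \in Z2 -> x \in Z1} ->
  interior_ok dir bi Z1 u v s -> interior_ok dir bi Z2 u v s.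
Proof.
move=> sub12; elim: s u v => [//| w s IH] u v H /= /andP[h1 h2].
apply/andP; split; last first.
  by apply: IH h2 => x xin; apply: H; rewrite inE xin orbT.
move: h1; case: (collider dir bi u v w) => /=.
  case/existsP => z /andP[zZ az]; apply/existsP; exists z.
  by rewrite (subsetP sub12) //.
by apply: contra => vZ2; apply: H => //; rewrite inE eqxx.
Qed.

Lemma mcb_mono (Z1 Z2 : {set V}) a p : Z1 \subset Z2 -> {in p, forall x, x \in Z2 -> x \in Z1} ->
  mcb Z1 a p -> mcb Z2 a p.
Proof.
move=> s H /and4P[h1 h2 h3 h4]; apply/and4P; split=> //.
by case: p H h1 h2 h3 h4 => // v s' H _ _ _; apply: int_mono.
Qed.

Lemma mcb_tail Z a v p : mcb Z a (v :: p) -> mcb Z v p.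
Proof.
case/and4P => /andP[_ h1]; rewrite cons_uniq => /andP[_ h2] h3 h4.
apply/and4P; split => //.
by case: p h1 h2 h3 h4 => // w p _ _ _ /andP[].
Qed.

Lemma mcb_suffix Z a p X : mcb Z a p -> X \in p -> mc Z X.
Proof.
elim: p a => [//| v p IH] a m; rewrite inE => /orP[/eqP->|Xp].
  by exists p; apply: mcb_tail m.
exact: (IH v (mcb_tail m) Xp).
Qed.

Fixpoint allcoll (u v : V) (s : seq V) : bool :=
  match s with [::] => true | w :: s' => collider dir bi u v w && allcoll v w s' end.

Definition cp (a : V) (p : seq V) := [&& path adj a p, uniq (a :: p), last a p == T &
  match p with [::] => true | v :: p' => allcoll a v p' end].

Lemma allcoll_int Z u v s : allcoll u v s -> {subset belast v s <= Z} ->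
  interior_ok dir bi Z u v s.
Proof.
elim: s u v => //= w s IH u v /andP[c ac] sub; rewrite c; apply/andP; split.
  by apply/existsP; exists v; rewrite sub ?inE ?eqxx //=; apply: connect0.
by apply: IH ac _ => x xb; apply: sub; rewrite inE xb orbT.
Qed.

Lemma cp_mc Z a p : cp a p -> {subset behead (belast a p) <= Z} -> mc Z a.
Proof.
case: p => [|v p] /and4P[h1 h2 h3 h4] sub; [exists [::] | exists (v :: p)];
  apply/and4P; split => //.
exact: allcoll_int h4 sub.
Qed.

Lemma cp_tail a v p : cp a (v :: p) -> cp v p.
Proof.
case/and4P => /andP[_ h1]; rewrite cons_uniq => /andP[_ h2] h3 h4.
apply/and4P; split => //.
by case: p h1 h2 h3 h4 => // w p _ _ _ /andP[].
Qed.

Lemma cp_suffix a p X : cp a p -> X \in belast a p ->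
  exists p2, cp X p2 /\ {subset belast X p2 <= belast a p}.
Proof.
elim: p a => [//| v p IH] a c; rewrite /= inE => /orP[/eqP->|Xb].
  by exists (v :: p); split.
case: (IH v (cp_tail c) Xb) => p2 [c2 s2]; exists p2; split => // x /s2 xb.
by rewrite /= inE xb orbT.
Qed.

Lemma cp_neq a p x : cp a p -> x \in belast a p -> x != T.
Proof.
case/and4P => _ u /eqP l _ xb; move: u; rewrite lastI l rcons_uniq => /andP[Tn _].
by apply/eqP => xT; rewrite -xT xb in Tn.
Qed.

Lemma cp_behead a p : cp a p -> a \notin behead (belast a p).
Proof.
case: p => [//|v p] /and4P[_ u _ _]; move: u; rewrite cons_uniq => /andP[an _].
by apply: contra an => /mem_belast.
Qed.

Lemma stab_allcoll S X a p : blanket S -> mcb (S :\ X) a p -> X \notin p -> cp a p.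
Proof.
move=> bS; elim: p a => [|v p IH] a m Xn.
  by case/and4P: m => *; apply/and4P.
have m' := mcb_tail m.
have Xn' : X \notin p by move: Xn; rewrite inE negb_or => /andP[].
have cv := IH v m' Xn'.
case/and4P: (m) => h1 h2 h3 h4; apply/and4P; split => //.
case: p IH m m' Xn Xn' cv h1 h2 h3 h4 => [//|w p] _ m m' Xn Xn' cv _ _ _ h4.
case/and4P: (cv) => _ _ _ /= ->; rewrite andbT.
apply/negPn/negP => nc; move: h4 => /=; rewrite (negbTE nc) => /andP[vS _].
have vX : v != X by move: Xn; rewrite inE negb_or eq_sym => /andP[].
have vS' : v \notin S by move: vS; rewrite !inE vX.
have vT : v != T by apply: (cp_neq cv); rewrite /= inE eqxx.
apply: (bS v vS' vT); exists (w :: p); apply: (mcb_mono (subD1set S X)) m'.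
move=> x xp xS; rewrite !inE xS andbT; apply/eqP => xX.
by move: Xn; rewrite -xX in_cons xp orbT.
Qed.

Fixpoint weak (Z : {set V}) (u v : V) (s : seq V) : bool :=
  match s with [::] => true
  | w :: s' => ((v \in Z) ==> collider dir bi u v w) && weak Z v w s' end.

Definition wk (Z : {set V}) (a : V) (p : seq V) := [&& path adj a p, uniq (a :: p), last a p == T &
  match p with [::] => true | v :: p' => weak Z a v p' end].

Lemma weak_allcoll Z u v s : allcoll u v s -> weak Z u v s.
Proof. by elim: s u v => //= w s IH u v /andP[-> /IH ->]; rewrite implybT. Qed.

Lemma weak_int Z W u v s : Z \subset W -> interior_ok dir bi W u v s -> weak Z u v s.
Proof.
move=> sub; elim: s u v => //= w s IH u v /andP[h1 /IH ->]; rewrite andbT.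
move: h1; case: (collider dir bi u v w) => /= vW; rewrite ?implybT //; apply/implyP => vZ.
by rewrite (subsetP sub _ vZ) in vW.
Qed.

Lemma wk_cp Z a p : cp a p -> wk Z a p.
Proof.
case/and4P => h1 h2 h3 h4; apply/and4P; split => //.
by case: p h1 h2 h3 h4 => // v p _ _ _; apply: weak_allcoll.
Qed.

Lemma wk_mcb Z W a p : Z \subset W -> mcb W a p -> wk Z a p.
Proof.
move=> sub /and4P[h1 h2 h3 h4]; apply/and4P; split => //.
by case: p h1 h2 h3 h4 => // v p _ _ _; apply: weak_int.
Qed.

Lemma G Z a p : blanket Z -> wk Z a p -> {subset belast a p <= Z} /\ cp a p.
Proof.
move=> bZ; elim: p a => [|v p IH] a w.
  by split => //; case/and4P: w => *; apply/and4P.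
have w' : wk Z v p.
  case/and4P: w => /andP[_ h1]; rewrite cons_uniq => /andP[_ h2] h3 h4.
  apply/and4P; split => //.
  by case: p IH h1 h2 h3 h4 => // x p _ _ _ _ /andP[].
case: (IH v w') => sub cv.
have ca : cp a (v :: p).
  case/and4P: w => h1 h2 h3 h4; apply/and4P; split => //.
  case: p IH w' sub cv h1 h2 h3 h4 => [//|x p] _ _ sub cv _ _ _ /= /andP[h5 _].
  case/and4P: cv => _ _ _ /= ->; rewrite andbT.
  by apply: (implyP h5); apply: sub; rewrite /= inE eqxx.
split => // y; rewrite /= inE => /orP[/eqP->|]; last exact: sub.
case aZ: (a \in Z) => //; exfalso.
have aT : a != T by apply: (cp_neq ca); rewrite /= inE eqxx.
by apply: (bZ a (negbT aZ) aT); apply: (cp_mc ca).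
Qed.

Lemma key S Z : S \subset F -> blanket S -> (forall X, X \in S -> mc (S :\ X) X) ->
  blanket Z -> S \subset Z.
Proof.
move=> SF bS st bZ; apply/subsetP => X XS.
case: (st X XS) => p m.
have Xn : X \notin p by case/and4P: m => _; rewrite cons_uniq => /andP[].
have c := stab_allcoll bS m Xn.
case: (G bZ (wk_cp Z c)) => sub _; apply: sub.
case: p m {Xn c} => [|v p] m /=; last by rewrite inE eqxx.
case/and4P: m => _ _ /= /eqP XT _.
by move: (subsetP SF X XS); rewrite /features !inE XT eqxx.
Qed.

Lemma sup B W : blanket B -> B \subset W -> blanket W.
Proof.
move=> bB BW Y YW YT [p m].
case: (G bB (wk_mcb BW m)) => sub _.
case: p m sub => [|v p] m sub.
  by case/and4P: m => _ _ /= /eqP YT' _; rewrite YT' eqxx in YT.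
have : Y \in B by apply: sub; rewrite /= inE eqxx.
by move/(subsetP BW); rewrite (negbTE YW).
Qed.

Lemma remb W X : blanket W -> ~ mc (W :\ X) X -> blanket (W :\ X).
Proof.
move=> bW nX Y YW YT [p m].
case: (Y =P X) => [YX| nYX]; first by subst; apply: nX; exists p.
have YW' : Y \notin W by move: YW; rewrite !inE; move/eqP: nYX => ->.
case Xp: (X \in p); first exact: nX (mcb_suffix m Xp).
apply: (bW Y YW' YT); exists p; apply: (mcb_mono (subD1set W X)) m.
move=> x xp xW; rewrite !inE xW andbT; apply/eqP => xX.
by rewrite -xX xp in Xp.
Qed.

Local Notation fw := (forward ci T fsel).
Local Notation bw := (backward ci T bsel).
Local Notation run := (pfbp_run ci T fsel bsel).
Local Notation after := (pfbp_after ci T fsel bsel).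

Lemma TnS Z : Z \subset F -> T \notin Z.
Proof. by move=> ZF; apply/negP => /(subsetP ZF); rewrite !inE eqxx. Qed.

Lemma inF y : (y \in F) = (y != T).
Proof. by rewrite !inE. Qed.

Lemma fw_S n R S : fw n.+1 R S = (let R' := [set X in R | ~~ ind X S] in
  if R' == set0 then S else let x := fsel R' S in fw n (R' :\ x) (x |: S)).
Proof. by []. Qed.

Lemma bw_S n S : bw n.+1 S = (let C := [set X in S | ind X (S :\ X)] in
  if C == set0 then S else bw n (S :\ bsel C S)).
Proof. by []. Qed.

Lemma filt_sub R (P : pred V) : [set X in R | P X] \subset R.
Proof. by apply/subsetP => y; rewrite inE => /andP[]. Qed.

Lemma fw_sub n R S : S \subset fw n R S /\ fw n R S \subset S :|: R.
Proof.
elim: n R S => [|n IH] R S; first by split; [exact: subxx | exact: subsetUl].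
rewrite fw_S /=; case: ifP => [_|/negbT R0]; first by split; [exact: subxx | exact: subsetUl].
set R' := [set X in R | ~~ ind X S] in R0 *.
have xR := subsetP (filt_sub R (fun X => ~~ ind X S)) _ (hfsel S R0).
case: (IH (R' :\ fsel R' S) (fsel R' S |: S)) => h1 h2; split.
  exact: subset_trans (subsetUr _ _) h1.
apply: (subset_trans h2); apply/subsetP => y; rewrite !in_setU !in_set1 => /orP[/orP[/eqP->|->]|yR]; rewrite ?xR ?orbT //.
by rewrite (subsetP (filt_sub R (fun X => ~~ ind X S)) y (subsetP (subD1set _ _) y yR)) orbT.
Qed.

Lemma bw_inv (P : {set V} -> Prop) n S : P S ->
  (forall W X, P W -> X \in W -> ind X (W :\ X) -> P (W :\ X)) -> P (bw n S).
Proof.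
elim: n S => // n IH S PS step; rewrite bw_S /=; case: ifP => // /negbT C0.
apply: IH => //; have := hbsel S C0; rewrite inE => /andP[XS Xi]; exact: step.
Qed.

Lemma bw_sub n S : bw n S \subset S.
Proof.
apply: (bw_inv (P := fun W => W \subset S)) => // W X WS _ _.
exact: subset_trans (subD1set W X) WS.
Qed.

Lemma bw_last n S : bw n S = S \/
  exists2 y, y \in S & (y \notin bw n S) && ind y (bw n S).
Proof.
elim: n S => [|n IH] S; first by left.
rewrite bw_S /=; case: ifP => [_|/negbT C0]; first by left.
right; set C := [set X in S | ind X (S :\ X)] in C0 *.
have := hbsel S C0; set b := bsel C S; rewrite inE => /andP[bS bI].
case: (IH (S :\ b)) => [->|[y yS /andP[yn yi]]].
  by exists b => //; rewrite !inE eqxx /= bI.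
by exists y; [move: yS; rewrite inE => /andP[] | rewrite yn yi].
Qed.

Lemma bw_stable n S : #|S| < n -> forall X, X \in bw n S -> ~~ ind X (bw n S :\ X).
Proof.
elim: n S => // n IH S Sn; rewrite bw_S /=; case: ifP => [/eqP C0 | /negbT C0].
  move=> X XS; apply/negP => Xi.
  have : X \in [set X in S | ind X (S :\ X)] by rewrite inE XS Xi.
  by rewrite C0 inE.
set C := [set X in S | ind X (S :\ X)] in C0 *; apply: IH; have := hbsel S C0; rewrite inE => /andP[bS _].
by rewrite (cardsD1 (bsel C S) S) bS add1n ltnS in Sn.
Qed.

Lemma fw_add n R S X : #|R| < n -> X \in R ->
  (forall S', S \subset S' -> S' \subset S :|: R -> X \notin S' -> ~~ ind X S') ->
  X \in fw n R S.
Proof.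
elim: n R S => // n IH R S Rn XR H.
case XS: (X \in S); first by have [h _] := fw_sub n.+1 R S; apply: (subsetP h).
rewrite fw_S /=.
have XR' : X \in [set Y in R | ~~ ind Y S].
  by rewrite inE XR H ?subxx ?subsetUl ?XS.
have R0 : [set Y in R | ~~ ind Y S] != set0 by apply/set0Pn; exists X.
rewrite (negbTE R0).
set R' := [set Y in R | ~~ ind Y S] in XR' R0 *.
have xR' := hfsel S R0; set x := fsel R' S in xR' *.
have R'R := filt_sub R (fun Y => ~~ ind Y S).
case: (X =P x) => [->|nXx].
  by have [h _] := fw_sub n (R' :\ x) (x |: S); apply: (subsetP h); rewrite !inE eqxx.
apply: IH.
- have := subset_leq_card R'R; rewrite (cardsD1 x R') xR' add1n => h.
  exact: leq_ltn_trans h Rn.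
- by rewrite in_setD1 XR' andbT; apply/eqP.
- move=> S' h1 h2 h3; apply: H => //.
    exact: subset_trans (subsetUr _ _) h1.
  apply: (subset_trans h2); rewrite subUset !subUset subsetUl /=.
  rewrite sub1set inE (subsetP R'R _ xR') orbT /=.
  exact: subset_trans (subD1set _ _) (subset_trans R'R (subsetUr _ _)).
Qed.

Lemma Sf_F S : S \subset F -> fw #|V|.+1 (F :\: S) S \subset F.
Proof.
move=> SF; have [_ h2] := fw_sub #|V|.+1 (F :\: S) S.
by apply: subset_trans h2 _; rewrite subUset SF subsetDl.
Qed.

Lemma run_F S : S \subset F -> run S \subset F.
Proof. by move=> SF; apply: subset_trans (bw_sub _ _) (Sf_F SF). Qed.

Lemma run_cp S a p : S \subset F -> cp a p -> {subset behead (belast a p) <= S} ->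
  {subset belast a p <= run S}.
Proof.
move=> SF c sub.
have SfF := Sf_F SF.
have [h1 h2] := fw_sub #|V|.+1 (F :\: S) S.
set Sf := fw #|V|.+1 (F :\: S) S in SfF h1 h2.
have aSf : {subset belast a p <= Sf}.
  move=> y yb; case: p c sub yb => [//|v p] c sub.
  rewrite /= inE => /orP[/eqP->|yb]; last by apply: (subsetP h1); apply: sub.
  have aT : a != T by apply: (cp_neq c); rewrite /= inE eqxx.
  case aS: (a \in S); first exact: (subsetP h1).
  apply: fw_add.
  - by rewrite ltnS max_card.
  - by rewrite !inE aS aT.
  move=> S' SS' S'sub aS'; apply/negP => /(indE _ aS' aT) [].
    by apply: TnS; apply: (subset_trans S'sub); rewrite subUset SF subsetDl.
  by apply: (cp_mc c) => z /sub /(subsetP SS').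
have step : forall W X, (W \subset F /\ {subset belast a p <= W}) -> X \in W ->
    ind X (W :\ X) -> (W :\ X \subset F /\ {subset belast a p <= W :\ X}).
  move=> W X [WF Wsub] XW Xi; split; first exact: subset_trans (subD1set W X) WF.
  move=> y yb; rewrite !inE (Wsub y yb) andbT; apply/eqP => yX; subst y.
  case: (cp_suffix c yb) => p2 [c2 s2].
  have WXF : W :\ X \subset F := subset_trans (subD1set W X) WF.
  have XT := cp_neq c yb.
  move: Xi => /(indE (TnS WXF) _ XT); rewrite !inE eqxx => /(_ isT); apply.
  apply: (cp_mc c2) => z zb; rewrite !inE.
  have zX : z != X by apply/eqP => zX; move: (cp_behead c2); rewrite -{1}zX zb.
  rewrite zX /=; apply: Wsub; apply: s2; apply: mem_behead zb.
have := @bw_inv (fun W => W \subset F /\ {subset belast a p <= W}) #|V|.+1 Sf (conj SfF aSf) step.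
by case.
Qed.

Lemma after_F k : after k \subset F.
Proof.
elim: k => [|k IH]; first exact: sub0set.
by rewrite /pfbp_after iterS; apply: run_F.
Qed.

Lemma after_cp k a p : cp a p -> size p <= k -> {subset belast a p <= after k}.
Proof.
elim: k a p => [|k IH] a [|v p] c //= sz; try by move=> y.
change (pfbp_after ci T fsel bsel k.+1) with (run (after k)).
apply: (run_cp (after_F k) c) => /=.
exact: (IH v p (cp_tail c) sz).
Qed.

Lemma stab_of S : S \subset F -> (forall X, X \in S -> ~~ ind X (S :\ X)) ->
  forall X, X \in S -> mc (S :\ X) X.
Proof.
move=> SF H X XS; apply: NNPP => nm; move/negP: (H X XS); apply.
have XT : X != T by have := subsetP SF X XS; rewrite inF.
apply/(indE _ _ XT) => //.
  exact: TnS (subset_trans (subD1set S X) SF).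
by rewrite !inE eqxx.
Qed.

Lemma run_B B W : B \subset W -> W \subset F -> blanket B ->
  (forall X, X \in B -> mc (B :\ X) X) -> B \subset F -> run W = B.
Proof.
move=> BW WF bB stB BF.
have SfF := Sf_F WF.
have [h1 _] := fw_sub #|V|.+1 (F :\: W) W.
set Sf := fw #|V|.+1 (F :\: W) W in SfF h1.
have step : forall W' X, (B \subset W' /\ W' \subset F) -> X \in W' ->
    ind X (W' :\ X) -> (B \subset W' :\ X /\ W' :\ X \subset F).
  move=> W' X [BW' W'F] XW Xi.
  have WXF : W' :\ X \subset F := subset_trans (subD1set W' X) W'F.
  have XT : X != T by have := subsetP W'F X XW; rewrite inF.
  have nm : ~ mc (W' :\ X) X.
    by apply/(indE (TnS WXF) _ XT) => //; rewrite !inE eqxx.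
  split => //; apply: (key BF bB stB); apply: remb nm.
  exact: sup bB BW'.
have := @bw_inv (fun W' => B \subset W' /\ W' \subset F) #|V|.+1 Sf (conj (subset_trans BW h1) SfF) step.
case => BR RF.
have st := @bw_stable #|V|.+1 Sf (leq_ltn_trans (max_card Sf) (ltnSn _)).
have stR := stab_of RF st.
rewrite /pfbp_run -/Sf; apply/eqP; rewrite eqEsubset BR andbT.
exact: key RF (sup bB BR) stR bB.
Qed.

Lemma fixpt S : S \subset F -> run S = S ->
  blanket S /\ (forall X, X \in S -> mc (S :\ X) X).
Proof.
move=> SF; have TS := TnS SF.
rewrite /pfbp_run fw_S; cbv zeta; case: ifP => [/eqP R0 | /negbT R0] hb.
  split.
    move=> Y YS YT; apply/(indE TS YS YT).
    have : Y \notin [set X in F :\: S | ~~ ind X S] by rewrite R0 inE.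
    by rewrite !inE YS YT /= negbK.
  apply: stab_of => //.
  move: hb; rewrite bw_S; cbv zeta; case: ifP => [/eqP C0 _ | /negbT C0 hb].
    move=> X XS; apply/negP => Xi.
    have : X \in [set X in S | ind X (S :\ X)] by rewrite inE XS Xi.
    by rewrite C0 inE.
  exfalso; have := hbsel S C0; rewrite inE => /andP[bS _].
  have := bw_sub #|V| (S :\ bsel [set X in S | ind X (S :\ X)] S).
  rewrite hb => /subsetP /(_ _ bS); rewrite !inE eqxx.
  by [].
exfalso.
set R' := [set X in F :\: S | ~~ ind X S] in R0 hb *.
have xR' := hfsel S R0; set x := fsel R' S in xR' hb.
have [h1 h2] := fw_sub #|V| (R' :\ x) (x |: S).
set Sf := fw #|V| (R' :\ x) (x |: S) in hb h1 h2.
have xS : x \notin S by move: xR'; rewrite !inE => /andP[/andP[]].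
case: (bw_last #|V|.+1 Sf) => [e | [y ySf /andP[yn yi]]].
  rewrite hb in e; move: xS; rewrite e.
  by move/negP; apply; apply: (subsetP h1); rewrite !inE eqxx.
rewrite hb in yn yi.
have : y \in R'.
  move: (subsetP h2 y ySf); rewrite !inE (negbTE yn) /= orbF.
  case/orP => [/eqP->|/andP[_ ->]] //.
  by move: xR'; rewrite !inE => /andP[/andP[_ ->] ->].
by rewrite inE yi andbF.
Qed.

Lemma bcE Z : Z \subset F -> blanket_cond ci T Z <-> blanket Z.
Proof.
move=> ZF; have TZ := TnS ZF.
have H : ci (~: (Z :|: [set T])) [set T] Z <->
         m_separated dir bi (~: (Z :|: [set T])) [set T] Z.
  apply: hfaith.
  - by rewrite disjoint_sym disjoints1 !inE eqxx orbT.
  - by rewrite -setI_eq0; apply/eqP/setP => y; rewrite !inE; case: (y \in Z); rewrite /= ?andbF.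
  - by rewrite disjoints1.
rewrite /blanket_cond; split => [/H Hs Y YZ YT | bZ].
  by apply: (Hs Y T); rewrite !inE ?negb_or ?YZ ?YT.
by apply/H => a b; rewrite !inE negb_or => /andP[aZ aT] /eqP ->; apply: bZ.
Qed.

Definition blanketb Z := [forall Y, ((Y \notin Z) && (Y != T)) ==> ind Y Z].

Lemma blanketbP Z : Z \subset F -> blanketb Z <-> blanket Z.
Proof.
move=> ZF; have TZ := TnS ZF; split => [/forallP H Y YZ YT | bZ].
  by move: (H Y); rewrite YZ YT /= => /(indE TZ YZ YT).
apply/forallP => Y; apply/implyP => /andP[YZ YT]; apply/(indE TZ YZ YT).
exact: bZ.
Qed.

Lemma main :
  (exists k, run (after k) = after k) /\
  (forall k, run (after k) = after k ->
   is_markov_blanket ci T (after k) /\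
   forall M, is_markov_blanket ci T M -> M = after k).
Proof.
split.
  have PF : (fun Z => (Z \subset F) && blanketb Z) F.
    rewrite /= subxx /=; apply/forallP => Y; rewrite inF.
    by case: (Y != T); rewrite ?andbF.
  case: (@minset_exists _ (fun Z => (Z \subset F) && blanketb Z) F PF) => B /minsetP [/andP[BF bBb] minB] _.
  have bB := (blanketbP BF).1 bBb.
  have stB : forall X, X \in B -> mc (B :\ X) X.
    move=> X XB; apply: NNPP => nm.
    have BXF : B :\ X \subset F := subset_trans (subD1set B X) BF.
    have h := (blanketbP BXF).2 (remb bB nm).
    have e := minB (B :\ X) (introT andP (conj BXF h)) (subD1set B X).
    by move: XB; rewrite -e !inE eqxx.
  have BS : B \subset after #|V|.
    apply/subsetP => X XB; case: (stB X XB) => p m.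
    have u : uniq (X :: p) by case/and4P: m.
    have Xn : X \notin p by move: u; rewrite cons_uniq => /andP[].
    have c := stab_allcoll bB m Xn.
    have sz : size p <= #|V|.
      have := max_card (mem (X :: p)); move/card_uniqP: u => -> /=.
      exact: ltnW.
    apply: (after_cp c sz).
    case: p m {Xn c sz u} => [|v p] m; last by rewrite /= inE eqxx.
    case/and4P: m => _ _ /= /eqP XT _.
    by move: (subsetP BF X XB); rewrite inF XT eqxx.
  have e : after #|V|.+1 = B.
    change (pfbp_after ci T fsel bsel #|V|.+1) with (run (after #|V|)).
    exact: run_B BS (after_F _) bB stB BF.
  by exists #|V|.+1; rewrite e; apply: (run_B (subxx B) BF bB stB BF).
move=> k hk.
have SF := after_F k.
case: (fixpt SF hk) => bS stS.
have bc := (bcE SF).2 bS.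
split.
  split => // S' /[dup] pr; rewrite properE => /andP[S'S nSS']; apply/negP => hb.
  have S'F := subset_trans S'S SF.
  by rewrite (key SF bS stS ((bcE S'F).1 hb)) in nSS'.
move=> M [MF hM minM].
have SM := key SF bS stS ((bcE MF).1 hM).
apply/eqP; rewrite eq_sym eqEproper SM /=; apply/negP => pr.
by move: (minM _ pr); rewrite bc.
Qed.

End Pf.

Theorem theorem2 (V : finType) (T : V) (dir bi : rel V)
  (ci : {set V} -> {set V} -> {set V} -> bool)
  (fsel bsel : {set V} -> {set V} -> V)
  (hG : is_DMAG dir bi)
  (hfaith : faithful_to ci dir bi)
  (hfsel : forall R S : {set V}, R != set0 -> fsel R S \in R)
  (hbsel : forall C S : {set V}, C != set0 -> bsel C S \in C) :
  (* with maxRuns = oo the Runs eventually leave S unchanged ... *)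
  (exists k, pfbp_run ci T fsel bsel (pfbp_after ci T fsel bsel k)
             = pfbp_after ci T fsel bsel k) /\
  (* ... and whenever they do, the output is the (unique) Markov blanket *)
  (forall k, pfbp_run ci T fsel bsel (pfbp_after ci T fsel bsel k)
             = pfbp_after ci T fsel bsel k ->
   is_markov_blanket ci T (pfbp_after ci T fsel bsel k) /\
   forall M, is_markov_blanket ci T M -> M = pfbp_after ci T fsel bsel k).
Proof. exact: (main T hfaith hfsel hbsel). Qed.
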